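(* Under the Setting, Algorithm and Strong convexity assumption described in the context, let $\{x_k\}_{k\ge1}$ be generated by the inexact CSA algorithm with policy (P2) and output $\bar x_{N,s}=\sum_{k\in\mathcal B}\rho_kx_k/\sum_{k\in\mathcal B}\rho_k$. Then for any $N\ge1$, with $K:=\max\{\mu_f,\mu_g\}\max\{L_f^2/\mu_f^2,L_{g,\mathcal X}^2/\mu_g^2\}$, $$f(\bar x_{N,s})-f(x^* )\le\frac{8L}{N+1}K,\qquad G(\bar x_{N,s})\le\frac{8L}{N}K+\frac{\sum_{k\in\mathcal B}k\,\varepsilon_k}{\sum_{k\in\mathcal B}k}.$$
   Context: Setting. $\mathcal X\subset\mathbb R^n$ is convex and compact; $f:\mathcal X\to\mathbb R$ is convex and $L_f$-Lipschitz; $\Delta\subset\mathbb R^d$ is compact; $g:\mathcal X\times\Delta\to\mathbb R$ is such that for every $\delta\in\Delta$, $x\mapsto g(x,\delta)$ is convex and $L_{g,\mathcal X}$-Lipschitz, and for every $x\in\mathcal X$, $\delta\mapsto g(x,\delta)$ is $L_{g,\Delta}$-Lipschitz. Let $G(x):=\max_{\delta\in\Delta}g(x,\delta)$ and assume the problem $\min_{x\in\mathcal X}\{f(x):G(x)\le0\}$ has an optimal solution $x^*$. Norms are Euclidean. $f'(x)$ denotes a subgradient of $f$ at $x$ and $g'(x,\delta)$ a subgradient of $g(\cdot,\delta)$ at $x$. Let $\omega_{\mathcal X}:\mathcal X\to\mathbb R$ be continuously differentiable and $1$-strongly convex; $V(x,z):=\omega_{\mathcal X}(z)-\omega_{\mathcal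 X}(x)-\langle\nabla\omega_{\mathcal X}(x),z-x\rangle$; prox-mapping $P_{x,\mathcal X}(y):=\arg\min_{z\in\mathcal X}\{\langle y,z\rangle+V(x,z)\}$; $D_{\mathcal X}:=\sqrt{\max_{x,z\in\mathcal X}V(x,z)}$. Algorithm (inexact CSA). Inputs: $N\ge1$, $x_1\in\mathcal X$, tolerances $\eta_k>0$, step-sizes $\gamma_k>0$. For $k=1,\dots,N$: choose some $\delta_k\in\Delta$ (an approximate maximizer of $g(x_k,\cdot)$); set $h_k=f'(x_k)$ if $g(x_k,\delta_k)\le\eta_k$ and $h_k=g'(x_k,\delta_k)$ otherwise; set $x_{k+1}=P_{x_k,\mathcal X}(\gamma_kh_k)$. For $1\le s\le N$ let $I=\{s,\dots,N\}$, $\mathcal B:=\{k\in I: g(x_k,\delta_k)\le\eta_k\}$, $\mathcal N:=I\setminus\mathcal B$. The cut-generation errors are $\varepsilon_k:=G(x_k)-g(x_k,\delta_k)\ge0$. Strong convexity assumption: $f$ is strongly convex with parameter $\mu_f>0$ (i.e. $f(x)\ge f(z)+\langle f'(z),x-z\rangle+\frac{\mu_f}{2}\|x-z\|^2$), each $g(\cdot,\delta)$ is strongly convex with parameter $\mu_g>0$ uniformly in $\delta$, and there is $L>0$ with $V(x,z)\le\frac L2\|x-z\|^2$ for all $x,z\in\mathcal X$. Define $a_k=\mu_f\gamma_k/L$ if $g(x_k,\delta_k)\le\eta_k$ and $a_k=\mu_g\gamma_k/L$ otherwise; $A_1=1$, $A_k=(1-a_k)A_{k-1}$ for $k\ge2$;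 $\rho_k=\gamma_k/A_k$. Policy (P2): for $k=1,\dots,N$, $\eta_k=\frac{8L}{N}\max\{\mu_f,\mu_g\}\max\{\frac{L_f^2}{\mu_f^2},\frac{L_{g,\mathcal X}^2}{\mu_g^2}\}$, $\gamma_k=\frac{2L}{\mu_f(k+1)}$ if $g(x_k,\delta_k)\le\eta_k$ and $\gamma_k=\frac{2L}{\mu_g(k+1)}$ otherwise, and $s=1$. *)

(* Defs.v *)
From Stdlib Require Import Reals Lra.
Open Scope R_scope.

(* Points of R^n are encoded as functions nat -> R; a point lies in R^n when
   all coordinates of index >= n vanish (see inRn). All inner products and
   norms only look at the first n coordinates. *)
Definition vec := nat -> R.

Definition inRn (n : nat) (x : vec) : Prop := forall i, (n <= i)%nat -> x i = 0.

Fixpoint sum_lt (n : nat) (F : nat -> R) : R :=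
  match n with O => 0 | S m => sum_lt m F + F m end.

Fixpoint sum_to (m : nat) (F : nat -> R) : R :=
  match m with O => 0 | S m' => sum_to m' F + F (S m') end.

Definition dot (n : nat) (x y : vec) : R := sum_lt n (fun i => x i * y i).
Definition vnorm (n : nat) (x : vec) : R := sqrt (dot n x x).
Definition vsub (x y : vec) : vec := fun i => x i - y i.
Definition vcomb (t : R) (x y : vec) : vec := fun i => t * x i + (1 - t) * y i.

Definition convex_set (n : nat) (Sx : vec -> Prop) : Prop :=
  (forall x, Sx x -> inRn n x) /\
  forall x y t, Sx x -> Sx y -> 0 <= t <= 1 -> Sx (vcomb t x y).

Definition seq_compact (n : nat) (Sx : vec -> Prop) : Prop :=
  (forall x, Sx x -> inRn n x) /\
  forall u : nat -> vec, (forall m, Sx (u m)) ->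
    exists (phi : nat -> nat) (l : vec),
      (forall m, (phi m < phi (S m))%nat) /\ Sx l /\
      Un_cv (fun m => vnorm n (vsub (u (phi m)) l)) 0.

Definition convex_on (n : nat) (Sx : vec -> Prop) (F : vec -> R) : Prop :=
  forall x y t, Sx x -> Sx y -> 0 <= t <= 1 ->
    F (vcomb t x y) <= t * F x + (1 - t) * F y.

Definition lipschitz_on (n : nat) (Sx : vec -> Prop) (F : vec -> R) (Lc : R) : Prop :=
  forall x y, Sx x -> Sx y -> Rabs (F x - F y) <= Lc * vnorm n (vsub x y).

Definition subgrad (n : nat) (Sx : vec -> Prop) (F : vec -> R) (x s : vec) : Prop :=
  inRn n s /\ forall y, Sx y -> F y >= F x + dot n s (vsub y x).

Definition strongly_convex_on (n : nat) (Sx : vec -> Prop) (F : vec -> R) (mu : R) : Prop :=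
  forall x z s, Sx x -> Sx z -> subgrad n Sx F z s ->
    F x >= F z + dot n s (vsub x z) + mu / 2 * (vnorm n (vsub x z)) ^ 2.

Definition frechet_at (n : nat) (w : vec -> R) (gw : vec -> vec) (x : vec) : Prop :=
  inRn n (gw x) /\
  forall eps, 0 < eps -> exists del, 0 < del /\
    forall y, inRn n y -> vnorm n (vsub y x) < del ->
      Rabs (w y - w x - dot n (gw x) (vsub y x)) <= eps * vnorm n (vsub y x).

Definition C1_on (n : nat) (Sx : vec -> Prop) (w : vec -> R) (gw : vec -> vec) : Prop :=
  (forall x, Sx x -> frechet_at n w gw x) /\
  forall x eps, Sx x -> 0 < eps -> exists del, 0 < del /\
    forall y, Sx y -> vnorm n (vsub y x) < del -> vnorm n (vsub (gw y) (gw x)) < eps.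

Definition bregV (n : nat) (w : vec -> R) (gw : vec -> vec) (x z : vec) : R :=
  w z - w x - dot n (gw x) (vsub z x).

Definition one_strongly_convex (n : nat) (Sx : vec -> Prop) (w : vec -> R) (gw : vec -> vec) : Prop :=
  forall x z, Sx x -> Sx z -> w z >= w x + dot n (gw x) (vsub z x) + / 2 * (vnorm n (vsub z x)) ^ 2.

Definition is_prox (n : nat) (Sx : vec -> Prop) (w : vec -> R) (gw : vec -> vec)
  (x y z : vec) : Prop :=
  Sx z /\ forall u, Sx u -> dot n y z + bregV n w gw x z <= dot n y u + bregV n w gw x u.

Definition is_max_over (D : vec -> Prop) (h : vec -> R) (v : R) : Prop :=
  (exists d, D d /\ h d = v) /\ forall d, D d -> h d <= v.

(* A_1 = 1, A_k = (1 - a_k) A_{k-1} for k >= 2 (A_0 := 1, unused) *)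
Fixpoint Aseq (a : nat -> R) (k : nat) : R :=
  match k with
  | O => 1
  | S k' => match k' with O => 1 | _ => (1 - a k) * Aseq a k' end
  end.

(* indicator-weighted sum over B = {k in 1..N : g(x_k,delta_k) <= eta_k} *)
Definition sumB (N : nat) (c : nat -> R) (eta : nat -> R) (F : nat -> R) : R :=
  sum_to N (fun k => if Rle_dec (c k) (eta k) then F k else 0).

(* Main.v *)
Require Import Defs.
From Stdlib Require Import Reals Lra Lia Classical FunctionalExtensionality.
Open Scope R_scope.

Lemma sum_lt_ext n F G : (forall i, F i = G i) -> sum_lt n F = sum_lt n G.
Proof. intros H; induction n; simpl; [reflexivity| rewrite IHn, H; reflexivity]. Qed.
Lemma sum_lt_add n F G : sum_lt n (fun i => F i + G i) = sum_lt n F + sum_lt n G.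
Proof. induction n; simpl; [ring| rewrite IHn; ring]. Qed.
Lemma sum_lt_sub n F G : sum_lt n (fun i => F i - G i) = sum_lt n F - sum_lt n G.
Proof. induction n; simpl; [ring| rewrite IHn; ring]. Qed.
Lemma sum_lt_scal n c F : sum_lt n (fun i => c * F i) = c * sum_lt n F.
Proof. induction n; simpl; [ring| rewrite IHn; ring]. Qed.
Lemma sum_lt_nonneg n F : (forall i, 0 <= F i) -> 0 <= sum_lt n F.
Proof. intros H; induction n; simpl; [lra| specialize (H n); lra]. Qed.

Lemma dot_sub_r n a b c : dot n a (vsub b c) = dot n a b - dot n a c.
Proof. unfold dot. rewrite <- sum_lt_sub. apply sum_lt_ext; intros; unfold vsub; ring. Qed.
Lemma dot_sub_l n a b c : dot n (vsub b c) a = dot n b a - dot n c a.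
Proof. unfold dot. rewrite <- sum_lt_sub. apply sum_lt_ext; intros; unfold vsub; ring. Qed.
Lemma dot_comm n a b : dot n a b = dot n b a.
Proof. unfold dot. apply sum_lt_ext; intros; ring. Qed.
Lemma dot_scal_l n t a b : dot n (fun i => t * a i) b = t * dot n a b.
Proof. unfold dot. rewrite <- sum_lt_scal. apply sum_lt_ext; intros; ring. Qed.
Lemma dot_scal_r n t a b : dot n a (fun i => t * b i) = t * dot n a b.
Proof. unfold dot. rewrite <- sum_lt_scal. apply sum_lt_ext; intros; ring. Qed.
Lemma dot_add3_l n a b c v : dot n (fun i => a i + b i - c i) v = dot n a v + dot n b v - dot n c v.
Proof. unfold dot. rewrite <- sum_lt_add, <- sum_lt_sub. apply sum_lt_ext; intros; ring. Qed.
Lemma dot_ext_r n a b b' : (forall i, b i = b' i) -> dot n a b = dot n a b'.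
Proof. intros H; unfold dot; apply sum_lt_ext; intros; rewrite H; ring. Qed.
Lemma dot_nonneg n a : 0 <= dot n a a.
Proof. unfold dot; apply sum_lt_nonneg; intros; nra. Qed.
Lemma young n a b : dot n a b <= (dot n a a + dot n b b) / 2.
Proof.
  assert (H: 0 <= dot n (vsub a b) (vsub a b)) by apply dot_nonneg.
  rewrite dot_sub_r, !dot_sub_l in H. rewrite (dot_comm n b a) in H. lra.
Qed.
Lemma vnorm_sq n a : vnorm n a ^ 2 = dot n a a.
Proof. unfold vnorm. apply pow2_sqrt, dot_nonneg. Qed.
Lemma vsub_sym_sq n a b : dot n (vsub a b) (vsub a b) = dot n (vsub b a) (vsub b a).
Proof. rewrite !dot_sub_r, !dot_sub_l, (dot_comm n a b). lra. Qed.
Lemma vnorm_sym n a b : vnorm n (vsub a b) = vnorm n (vsub b a).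
Proof. unfold vnorm; rewrite vsub_sym_sq; reflexivity. Qed.

Lemma prox_opt n X w gw x y z u :
  convex_set n X -> C1_on n X w gw -> is_prox n X w gw x y z -> X u ->
  0 <= dot n (fun i => y i + gw z i - gw x i) (vsub u z).
Proof.
  intros HX Hw [Hz Hmin] Hu.
  set (Q := dot n (fun i => y i + gw z i - gw x i) (vsub u z)).
  destruct (Rle_or_lt 0 Q) as [HQ|HQ]; [exact HQ|exfalso].
  set (D := vnorm n (vsub u z)).
  assert (HD : 0 <= D) by apply sqrt_pos.
  destruct (proj1 Hw z Hz) as [_ Hfr].
  set (eps := - Q / (2 * (D + 1))).
  assert (Heps : 0 < eps) by (unfold eps; apply Rdiv_lt_0_compat; lra).
  destruct (Hfr eps Heps) as [del [Hdel Hfr2]].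
  set (t := Rmin (1/2) (del / (2 * (D + 1)))).
  assert (Ht0 : 0 < t) by (unfold t; apply Rmin_glb_lt; [lra| apply Rdiv_lt_0_compat; lra]).
  assert (Ht1 : t <= 1/2) by apply Rmin_l.
  assert (Ht2 : t <= del / (2 * (D + 1))) by apply Rmin_r.
  set (zt := vcomb t u z).
  assert (Hzt : X zt) by (apply (proj2 HX); auto; lra).
  assert (Esub : forall i, vsub zt z i = t * vsub u z i) by (intros; unfold zt, vsub, vcomb; ring).
  assert (Enorm : vnorm n (vsub zt z) = t * D).
  { unfold vnorm, D, vnorm. unfold dot at 1.
    rewrite (sum_lt_ext n _ (fun i => (t * t) * (vsub u z i * vsub u z i))) by (intros; rewrite Esub; ring).
    rewrite sum_lt_scal. rewrite sqrt_mult by (nra || apply dot_nonneg).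
    rewrite sqrt_square by lra. reflexivity. }
  assert (Hlt : vnorm n (vsub zt z) < del).
  { rewrite Enorm.
    assert (t * (2 * (D+1)) <= del).
    { apply (Rmult_le_compat_r (2*(D+1))) in Ht2; [|lra].
      unfold Rdiv in Ht2; rewrite Rmult_assoc, Rinv_l in Ht2; lra. }
    nra. }
  specialize (Hfr2 zt (proj1 HX zt Hzt) Hlt). rewrite Enorm in Hfr2.
  pose proof (Rle_trans _ _ _ (Rle_abs _) Hfr2) as Hw1.
  specialize (Hmin zt Hzt). unfold bregV in Hmin.
  assert (E1 : dot n y zt - dot n y z = t * dot n y (vsub u z)).
  { rewrite <- dot_sub_r, <- dot_scal_r. apply dot_ext_r; intros; apply Esub. }
  assert (E2 : dot n (gw x) (vsub zt x) - dot n (gw x) (vsub z x) = t * dot n (gw x) (vsub u z)).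
  { assert (dot n (gw x) (vsub zt z) = t * dot n (gw x) (vsub u z)) as E by
      (rewrite <- dot_scal_r; apply dot_ext_r; intros; apply Esub).
    rewrite !dot_sub_r in *. lra. }
  assert (E3 : dot n (gw z) (vsub zt z) = t * dot n (gw z) (vsub u z)).
  { rewrite <- dot_scal_r. apply dot_ext_r; intros; apply Esub. }
  assert (EQ : Q = dot n y (vsub u z) + dot n (gw z) (vsub u z) - dot n (gw x) (vsub u z))
    by (unfold Q; apply dot_add3_l).
  assert (Hmain : 0 <= t * (Q + eps * D)).
  { rewrite EQ. nra. }
  assert (Hneg : Q + eps * D < 0).
  { assert (2 * (D + 1) * (Q + eps * D) = Q * (D + 2)).
    { unfold eps. field. lra. }
    nra. }
  nra.
Qed.

Lemma prox3 n X w gw x y z u :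
  convex_set n X -> C1_on n X w gw -> is_prox n X w gw x y z -> X u ->
  dot n y (vsub z u) <= bregV n w gw x u - bregV n w gw x z - bregV n w gw z u.
Proof.
  intros HX Hw Hp Hu. pose proof (prox_opt _ _ _ _ _ _ _ _ HX Hw Hp Hu) as H.
  rewrite dot_add3_l in H. unfold bregV. rewrite !dot_sub_r in *. lra.
Qed.

Lemma prox_step n X w gw x u z h gam :
  convex_set n X -> C1_on n X w gw -> one_strongly_convex n X w gw ->
  X x -> X u -> is_prox n X w gw x (fun i => gam * h i) z ->
  gam * dot n h (vsub x u) <= bregV n w gw x u - bregV n w gw z u + gam ^ 2 * dot n h h / 2.
Proof.
  intros HX Hw Hsc Hx Hu Hp.
  pose proof (prox3 _ _ _ _ _ _ _ _ HX Hw Hp Hu) as H3.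
  pose proof (Hsc x z Hx (proj1 Hp)) as Hs. rewrite vnorm_sq in Hs.
  pose proof (young n (fun i => gam * h i) (vsub x z)) as Hy.
  rewrite vsub_sym_sq in Hy.
  rewrite !dot_scal_l, dot_scal_r in Hy. rewrite dot_scal_l in H3.
  unfold bregV in *. rewrite !dot_sub_r in *. nra.
Qed.

Lemma Rdiv_le_0_compat a b : 0 <= a -> 0 < b -> 0 <= a / b.
Proof. intros; unfold Rdiv; apply Rmult_le_pos; [lra| left; apply Rinv_0_lt_compat; lra]. Qed.
Lemma Rdiv_le_1 a b : 0 < b -> a <= b -> a / b <= 1.
Proof. intros Hb Hab. replace 1 with (b / b) by (field; lra). unfold Rdiv; apply Rmult_le_compat_r; [left; apply Rinv_0_lt_compat; lra| lra]. Qed.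

Lemma sum_to_ext m F G : (forall k, (1 <= k <= m)%nat -> F k = G k) -> sum_to m F = sum_to m G.
Proof. induction m; intros H; simpl; [reflexivity|]. rewrite IHm by (intros; apply H; lia). rewrite H by lia. reflexivity. Qed.
Lemma sum_to_add m F G : sum_to m (fun k => F k + G k) = sum_to m F + sum_to m G.
Proof. induction m; simpl; [ring| rewrite IHm; ring]. Qed.
Lemma sum_to_scal m c F : sum_to m (fun k => c * F k) = c * sum_to m F.
Proof. induction m; simpl; [ring| rewrite IHm; ring]. Qed.
Lemma sum_to_le m F G : (forall k, (1 <= k <= m)%nat -> F k <= G k) -> sum_to m F <= sum_to m G.
Proof. induction m; intros H; simpl; [lra|]. assert (H1 := H (S m)). assert (sum_to m F <= sum_to m G) by (apply IHm; intros; apply H; lia). assert (F (S m) <= G (S m)) by (apply H; lia). lra. Qed.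
Lemma sum_to_lt m F G : (1 <= m)%nat -> (forall k, (1 <= k <= m)%nat -> F k < G k) -> sum_to m F < sum_to m G.
Proof. intros Hm H. destruct m; [lia|]. simpl.
  assert (sum_to m F <= sum_to m G) by (apply sum_to_le; intros; left; apply H; lia).
  assert (F (S m) < G (S m)) by (apply H; lia). lra. Qed.
Lemma sum_to_nonneg m F : (forall k, (1 <= k <= m)%nat -> 0 <= F k) -> 0 <= sum_to m F.
Proof. intros H. replace 0 with (sum_to m (fun _ => 0)). apply sum_to_le; auto.
  induction m; simpl; [reflexivity| rewrite IHm; [ring| intros; apply H; lia]]. Qed.
Lemma sum_to_zero m F : (forall k, (1 <= k <= m)%nat -> F k = 0) -> sum_to m F = 0.
Proof. induction m; intros H; simpl; [reflexivity|]. rewrite IHm by (intros; apply H; lia). rewrite H by lia. ring. Qed.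
Lemma sum_to_ge_term m F j : (forall k, (1 <= k <= m)%nat -> 0 <= F k) -> (1 <= j <= m)%nat -> F j <= sum_to m F.
Proof. induction m; intros H Hj; [lia|]. simpl.
  assert (0 <= sum_to m F) by (apply sum_to_nonneg; intros; apply H; lia).
  destruct (Nat.eq_dec j (S m)) as [->|Hne]; [lra|].
  assert (F j <= sum_to m F) by (apply IHm; [intros; apply H; lia| lia]).
  assert (0 <= F (S m)) by (apply H; lia). lra. Qed.
Lemma sum_to_zero_inv m F : (forall k, (1 <= k <= m)%nat -> 0 <= F k) -> sum_to m F = 0 ->
  forall k, (1 <= k <= m)%nat -> F k = 0.
Proof. intros H H0 k Hk. pose proof (sum_to_ge_term m F k H Hk). pose proof (H k Hk). lra. Qed.
Lemma sum_to_id m : sum_to m (fun k => INR k) = INR m * (INR m + 1) / 2.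
Proof. induction m. - simpl; lra. - change (sum_to (S m) (fun k => INR k)) with (sum_to m (fun k => INR k) + INR (S m)). rewrite IHm, S_INR. field. Qed.
Lemma telescope m (P W : nat -> R) C : (forall k, (1 <= k <= m)%nat -> P k <= W k - W (S k) + C) ->
  sum_to m P <= W 1%nat - W (S m) + INR m * C.
Proof. induction m; intros H; simpl sum_to; [simpl; lra|].
  assert (sum_to m P <= W 1%nat - W (S m) + INR m * C) by (apply IHm; intros; apply H; lia).
  assert (P (S m) <= W (S m) - W (S (S m)) + C) by (apply H; lia). rewrite S_INR. lra. Qed.

Lemma jensen n (X : vec -> Prop) (F : vec -> R) (x : nat -> vec) (p : nat -> R) :
  convex_set n X -> convex_on n X F -> forall m,
  (forall k, (1 <= k <= m)%nat -> 0 <= p k /\ X (x k)) -> 0 < sum_to m p ->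
  X (fun i => sum_to m (fun k => p k * x k i) / sum_to m p) /\
  F (fun i => sum_to m (fun k => p k * x k i) / sum_to m p) <= sum_to m (fun k => p k * F (x k)) / sum_to m p.
Proof.
  intros HX HF m. induction m; intros Hp Hs; simpl in Hs; [lra|].
  assert (HS0 : 0 <= sum_to m p) by (apply sum_to_nonneg; intros; apply Hp; lia).
  destruct (Hp (S m) ltac:(lia)) as [Hpm Hxm].
  destruct HS0 as [HS0|HS0].
  - destruct IHm as [IX IF]; [intros; apply Hp; lia| exact HS0|].
    set (S0 := sum_to m p) in *. set (t := S0 / (S0 + p (S m))).
    assert (Ht : 0 <= t <= 1).
    { unfold t; split; [apply Rdiv_le_0_compat; lra|]. apply Rdiv_le_1; nra. }
    assert (E : (fun i => sum_to (S m) (fun k => p k * x k i) / sum_to (S m) p)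
                = vcomb t (fun i => sum_to m (fun k => p k * x k i) / S0) (x (S m))).
    { apply functional_extensionality; intros i. unfold vcomb, t. simpl. fold S0. field. lra. }
    rewrite E. split; [apply (proj2 HX); auto|].
    eapply Rle_trans; [apply HF; auto|].
    simpl. fold S0.
    apply (Rmult_le_compat_l t) in IF; [|lra].
    replace (t * (sum_to m (fun k => p k * F (x k)) / S0)) with
       (sum_to m (fun k => p k * F (x k)) / (S0 + p (S m))) in IF by (unfold t; field; lra).
    replace (1 - t) with (p (S m) / (S0 + p (S m))) by (unfold t; field; lra).
    replace ((sum_to m (fun k => p k * F (x k)) + p (S m) * F (x (S m))) / (S0 + p (S m)))
      with (sum_to m (fun k => p k * F (x k)) / (S0 + p (S m)) + p (S m) / (S0 + p (S m)) * F (x (S m)))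
      by (field; lra).
    lra.
  - assert (Hz := sum_to_zero_inv m p ltac:(intros; apply Hp; lia) (eq_sym HS0)).
    assert (E : (fun i => sum_to (S m) (fun k => p k * x k i) / sum_to (S m) p) = x (S m)).
    { apply functional_extensionality; intros i. simpl. rewrite <- HS0.
      rewrite (sum_to_zero m (fun k => p k * x k i)) by (intros; rewrite Hz by auto; ring).
      field. lra. }
    rewrite E. split; auto. simpl. rewrite <- HS0.
    rewrite (sum_to_zero m (fun k => p k * F (x k))) by (intros; rewrite Hz by auto; ring).
    right; field; lra.
Qed.

Lemma Aseq_val (a : nat -> R) m : (forall k, (1 <= k <= m)%nat -> a k = 2 / (INR k + 1)) ->
  forall k, (1 <= k <= m)%nat -> Aseq a k = 2 / (INR k * (INR k + 1)).
Proof.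
  intros Ha k Hk. induction k; [lia|]. destruct k.
  - simpl. field.
  - change (Aseq a (S (S k))) with ((1 - a (S (S k))) * Aseq a (S k)).
    rewrite IHk by lia. rewrite Ha by lia. rewrite !S_INR.
    pose proof (pos_INR k). field. lra.
Qed.

Lemma step_arith (s L mu gam hh P D Vk Vk1 e M : R) :
  1 <= s -> 0 < L -> 0 < mu -> gam = 2 * L / (mu * (s + 1)) -> 0 <= hh -> hh / mu ^ 2 <= M ->
  P <= D - mu / 2 * e -> gam * D <= Vk - Vk1 + gam ^ 2 * hh / 2 -> Vk <= L / 2 * e ->
  s * L / mu * P <= s * (s - 1) / 2 * Vk - (s + 1) * s / 2 * Vk1 + L ^ 2 * M.
Proof.
  intros Hs HL Hmu Hg Hhh HM H1 H2 H3.
  set (q := s * (s + 1) / 2).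
  assert (Hq : 0 < q) by (unfold q; nra).
  assert (Eq1 : q * gam = s * L / mu) by (rewrite Hg; unfold q; field; lra).
  assert (Eq2 : gam * mu = 2 * L / (s + 1)) by (rewrite Hg; field; lra).
  assert (Hgam : 0 < gam) by (rewrite Hg; apply Rdiv_lt_0_compat; nra).
  assert (A1 : gam * P <= gam * D - gam * mu / 2 * e) by nra.
  assert (A2 : gam * mu / 2 * e >= 2 / (s + 1) * Vk).
  { replace (gam * mu / 2 * e) with (2 / (s+1) * (L / 2 * e)) by (rewrite <- (Rmult_comm mu), <- Rmult_assoc, (Rmult_comm mu) ; rewrite Eq2 ; field; lra).
    apply Rle_ge, Rmult_le_compat_l; [apply Rdiv_le_0_compat; lra| lra]. }
  assert (A3 : gam * P <= (1 - 2 / (s + 1)) * Vk - Vk1 + gam ^ 2 * hh / 2) by lra.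
  apply (Rmult_le_compat_l q) in A3; [|lra].
  replace (s * L / mu * P) with (q * (gam * P)) by (rewrite <- Eq1; ring).
  eapply Rle_trans; [exact A3|].
  assert (E4 : q * ((1 - 2 / (s + 1)) * Vk) = s * (s - 1) / 2 * Vk) by (unfold q; field; lra).
  assert (E5 : q * (gam ^ 2 * hh / 2) = L ^ 2 * (hh / mu ^ 2) * (s / (s + 1))) by (unfold q; rewrite Hg; field; lra).
  assert (B1 : s / (s + 1) <= 1) by (apply Rdiv_le_1; nra).
  assert (B2 : 0 <= hh / mu ^ 2) by (apply Rdiv_le_0_compat; nra).
  assert (B3 : 0 <= s / (s + 1)) by (apply Rdiv_le_0_compat; lra).
  assert (B4 : L ^ 2 * (hh / mu ^ 2) * (s / (s + 1)) <= L ^ 2 * M).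
  { assert (0 <= L^2) by nra.
    assert ((hh / mu ^ 2) * (s / (s + 1)) <= M) by nra. nra. }
  replace (q * ((1 - 2 / (s + 1)) * Vk - Vk1 + gam ^ 2 * hh / 2)) with
    (q * ((1 - 2 / (s + 1)) * Vk) - q * Vk1 + q * (gam ^ 2 * hh / 2)) by ring.
  rewrite E4, E5. unfold q. lra.
Qed.

Lemma div_le_const a b C : 0 < b -> a <= C * b -> a / b <= C.
Proof. intros Hb H. replace C with ((C * b) / b) by (field; lra).
  unfold Rdiv; apply Rmult_le_compat_r; [left; apply Rinv_0_lt_compat; lra| lra]. Qed.

Theorem mainTheorem2
  (n d : nat) (X Delta : vec -> Prop)
  (f : vec -> R) (g : vec -> vec -> R) (G : vec -> R)
  (Lf LgX LgD mu_f mu_g L : R)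
  (w : vec -> R) (gw : vec -> vec)
  (xstar : vec)
  (N : nat) (x delta h : nat -> vec) (eta gamma : nat -> R)
  (* Setting *)
  (HX : convex_set n X) (HXc : seq_compact n X)
  (HD : seq_compact d Delta)
  (HLf : 0 <= Lf) (HLgX : 0 <= LgX) (HLgD : 0 <= LgD)
  (Hfconv : convex_on n X f) (Hflip : lipschitz_on n X f Lf)
  (Hgconv : forall dl, Delta dl -> convex_on n X (fun y => g y dl))
  (HglipX : forall dl, Delta dl -> lipschitz_on n X (fun y => g y dl) LgX)
  (HglipD : forall y, X y -> lipschitz_on d Delta (fun dl => g y dl) LgD)
  (HG : forall y, X y -> is_max_over Delta (fun dl => g y dl) (G y))
  (Hxstar : X xstar /\ G xstar <= 0 /\ forall y, X y -> G y <= 0 -> f xstar <= f y)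
  (Hw : C1_on n X w gw) (Hwsc : one_strongly_convex n X w gw)
  (* Strong convexity assumption *)
  (Hmuf : 0 < mu_f) (Hmug : 0 < mu_g) (HL : 0 < L)
  (Hfsc : strongly_convex_on n X f mu_f)
  (Hgsc : forall dl, Delta dl -> strongly_convex_on n X (fun y => g y dl) mu_g)
  (HVL : forall y z, X y -> X z -> bregV n w gw y z <= L / 2 * (vnorm n (vsub y z)) ^ 2)
  (* Algorithm (inexact CSA) with policy (P2), s = 1 *)
  (HN : (1 <= N)%nat)
  (Hx1 : X (x 1%nat))
  (Heta : forall k, (1 <= k <= N)%nat ->
     eta k = 8 * L / INR N * (Rmax mu_f mu_g * Rmax (Lf ^ 2 / mu_f ^ 2) (LgX ^ 2 / mu_g ^ 2)))
  (Hdelta : forall k, (1 <= k <= N)%nat -> Delta (delta k))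
  (Hstep_f : forall k, (1 <= k <= N)%nat -> g (x k) (delta k) <= eta k ->
     subgrad n X f (x k) (h k) /\ vnorm n (h k) <= Lf /\
     gamma k = 2 * L / (mu_f * (INR k + 1)))
  (Hstep_g : forall k, (1 <= k <= N)%nat -> ~ (g (x k) (delta k) <= eta k) ->
     subgrad n X (fun y => g y (delta k)) (x k) (h k) /\ vnorm n (h k) <= LgX /\
     gamma k = 2 * L / (mu_g * (INR k + 1)))
  (Hprox : forall k, (1 <= k <= N)%nat ->
     is_prox n X w gw (x k) (fun i => gamma k * h k i) (x (S k))) :
  let c := fun k => g (x k) (delta k) in
  let a := fun k => if Rle_dec (c k) (eta k) then mu_f * gamma k / L
                    else mu_g * gamma k / L in
  let rho := fun k => gamma k / Aseq a k in
  let xbar : vec := fun i => sumB N c eta (fun k => rho k * x k i) / sumB N c eta rho in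
  let eps := fun k => G (x k) - g (x k) (delta k) in
  let K := Rmax mu_f mu_g * Rmax (Lf ^ 2 / mu_f ^ 2) (LgX ^ 2 / mu_g ^ 2) in
  (exists k, (1 <= k <= N)%nat /\ c k <= eta k) /\
  f xbar - f xstar <= 8 * L / (INR N + 1) * K /\
  G xbar <= 8 * L / INR N * K
            + sumB N c eta (fun k => INR k * eps k) / sumB N c eta (fun k => INR k).
Proof.
  intros c a rho xbar eps K.
  destruct Hxstar as [Hu [HGu Hopt]].
  set (u := xstar) in *.
  set (M := Rmax (Lf ^ 2 / mu_f ^ 2) (LgX ^ 2 / mu_g ^ 2)).
  set (mx := Rmax mu_f mu_g).
  assert (EK : K = mx * M) by reflexivity.
  assert (HM0 : 0 <= M).
  { apply Rle_trans with (Lf ^ 2 / mu_f ^ 2); [apply Rdiv_le_0_compat; nra| apply Rmax_l]. }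
  assert (Hmxf : mu_f <= mx) by apply Rmax_l.
  assert (Hmxg : mu_g <= mx) by apply Rmax_r.
  assert (HN1 : 1 <= INR N) by (apply (le_INR 1 N); lia).
  assert (Heta' : forall k, (1 <= k <= N)%nat -> eta k = 8 * L / INR N * K) by exact Heta.
  assert (HXk : forall k, (1 <= k <= S N)%nat -> X (x k)).
  { intros k Hk. induction k; [lia|]. destruct k; [exact Hx1|].
    exact (proj1 (Hprox (S k) ltac:(lia))). }
  assert (Hk1 : forall k, (1 <= k)%nat -> 1 <= INR k) by (intros k Hk; apply (le_INR 1 k); lia).
  assert (Ha : forall k, (1 <= k <= N)%nat -> a k = 2 / (INR k + 1)).
  { intros k Hk. pose proof (Hk1 k ltac:(lia)). unfold a.
    destruct (Rle_dec (c k) (eta k)) as [HB|HB].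
    - destruct (Hstep_f k Hk HB) as [_ [_ ->]]. field. lra.
    - destruct (Hstep_g k Hk HB) as [_ [_ ->]]. field. lra. }
  assert (HrhoB : forall k, (1 <= k <= N)%nat -> c k <= eta k -> rho k = INR k * L / mu_f).
  { intros k Hk HB. pose proof (Hk1 k ltac:(lia)). unfold rho.
    rewrite (Aseq_val a N Ha k Hk). destruct (Hstep_f k Hk HB) as [_ [_ ->]]. field. lra. }
  set (p := fun k => if Rle_dec (c k) (eta k) then rho k else 0).
  assert (Hp : forall k, (1 <= k <= N)%nat -> p k = if Rle_dec (c k) (eta k) then INR k * L / mu_f else 0).
  { intros k Hk. unfold p. destruct (Rle_dec (c k) (eta k)); [apply HrhoB; auto| reflexivity]. }
  assert (Hp0 : forall k, (1 <= k <= N)%nat -> 0 <= p k).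
  { intros k Hk. rewrite Hp by auto. pose proof (Hk1 k ltac:(lia)).
    destruct (Rle_dec (c k) (eta k)); [apply Rdiv_le_0_compat; nra| lra]. }
  set (PhiB := fun k => if Rle_dec (c k) (eta k) then INR k * L / mu_f * (f (x k) - f u) else 0).
  set (PhiN := fun k => if Rle_dec (c k) (eta k) then 0 else INR k * L / mu_g * (c k - g u (delta k))).
  set (W := fun k => INR k * (INR k - 1) / 2 * bregV n w gw (x k) u).
  assert (Vnn : forall y z, X y -> X z -> 0 <= bregV n w gw y z).
  { intros y z Hy Hz. pose proof (Hwsc y z Hy Hz). unfold bregV.
    pose proof (pow2_ge_0 (vnorm n (vsub z y))). lra. }
  assert (Hhh : forall k Lc mu, 0 < mu -> 0 <= Lc -> vnorm n (h k) <= Lc -> Lc ^ 2 / mu ^ 2 <= M ->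
            dot n (h k) (h k) / mu ^ 2 <= M).
  { intros k Lc mu Hmu HLc Hh HLM. rewrite <- vnorm_sq. eapply Rle_trans; [|exact HLM].
    unfold Rdiv; apply Rmult_le_compat_r; [left; apply Rinv_0_lt_compat; nra|].
    pose proof (sqrt_pos (dot n (h k) (h k))). unfold vnorm in *. nra. }
  assert (Hstep : forall k, (1 <= k <= N)%nat -> PhiB k + PhiN k <= W k - W (S k) + L ^ 2 * M).
  { intros k Hk. pose proof (Hk1 k ltac:(lia)).
    assert (Hxk : X (x k)) by (apply HXk; lia).
    pose proof (HVL (x k) u Hxk Hu) as HV.
    unfold PhiB, PhiN, W. rewrite S_INR.
    destruct (Rle_dec (c k) (eta k)) as [HB|HB].
    - destruct (Hstep_f k Hk HB) as [Hsub [Hh Hg]].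
      pose proof (Hfsc u (x k) (h k) Hu Hxk Hsub) as Hsc.
      rewrite vnorm_sym, !dot_sub_r in Hsc.
      pose proof (prox_step n X w gw (x k) u (x (S k)) (h k) (gamma k) HX Hw Hwsc Hxk Hu (Hprox k Hk)) as Hps.
      pose proof (step_arith (INR k) L mu_f (gamma k) (dot n (h k) (h k)) (f (x k) - f u)
         (dot n (h k) (vsub (x k) u)) (bregV n w gw (x k) u) (bregV n w gw (x (S k)) u)
         (vnorm n (vsub (x k) u) ^ 2) M ltac:(lra) HL Hmuf Hg (dot_nonneg _ _)
         (Hhh k Lf mu_f Hmuf HLf Hh (Rmax_l _ _)) ltac:(rewrite dot_sub_r; lra) Hps HV) as HA.
      ring_simplify. ring_simplify in HA. lra.
    - destruct (Hstep_g k Hk HB) as [Hsub [Hh Hg]].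
      pose proof (Hgsc (delta k) (Hdelta k Hk) u (x k) (h k) Hu Hxk Hsub) as Hsc.
      cbv beta in Hsc.
      rewrite vnorm_sym, !dot_sub_r in Hsc.
      pose proof (prox_step n X w gw (x k) u (x (S k)) (h k) (gamma k) HX Hw Hwsc Hxk Hu (Hprox k Hk)) as Hps.
      pose proof (step_arith (INR k) L mu_g (gamma k) (dot n (h k) (h k)) (c k - g u (delta k))
         (dot n (h k) (vsub (x k) u)) (bregV n w gw (x k) u) (bregV n w gw (x (S k)) u)
         (vnorm n (vsub (x k) u) ^ 2) M ltac:(lra) HL Hmug Hg (dot_nonneg _ _)
         (Hhh k LgX mu_g Hmug HLgX Hh (Rmax_r _ _)) ltac:(unfold c; rewrite dot_sub_r; lra) Hps HV) as HA.
      ring_simplify. ring_simplify in HA. lra. }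
  assert (Hsum : sum_to N PhiB + sum_to N PhiN <= INR N * (L ^ 2 * M)).
  { rewrite <- sum_to_add.
    pose proof (telescope N (fun k => PhiB k + PhiN k) W (L ^ 2 * M) Hstep) as HT.
    assert (W 1%nat = 0).
    { unfold W. change (INR 1) with 1. rewrite Rminus_diag, Rmult_0_r. unfold Rdiv. rewrite !Rmult_0_l. reflexivity. }
    assert (0 <= W (S N)).
    { unfold W. pose proof (Hk1 (S N) ltac:(lia)).
      pose proof (Vnn (x (S N)) u (HXk (S N) ltac:(lia)) Hu).
      apply Rmult_le_pos; [apply Rdiv_le_0_compat; nra| auto]. }
    lra. }
  assert (HPhiN : forall k, (1 <= k <= N)%nat -> ~ c k <= eta k ->
            8 * INR k * L ^ 2 * M / INR N < PhiN k).
  { intros k Hk HB. pose proof (Hk1 k ltac:(lia)). unfold PhiN.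
    destruct (Rle_dec (c k) (eta k)) as [|_]; [contradiction|].
    assert (Hgu : g u (delta k) <= 0).
    { pose proof (proj2 (HG u Hu) (delta k) (Hdelta k Hk)). cbv beta in *. lra. }
    rewrite Heta' in HB by auto.
    assert (Hpos : 0 < INR k * L / mu_g) by (apply Rdiv_lt_0_compat; nra).
    assert (E : 8 * INR k * L ^ 2 * M / INR N = INR k * L / mu_g * (8 * L / INR N * (mu_g * M))) by (field; lra).
    rewrite E. apply Rmult_lt_compat_l; [exact Hpos|].
    assert (8 * L / INR N * (mu_g * M) <= 8 * L / INR N * K).
    { rewrite EK. apply Rmult_le_compat_l; [apply Rdiv_le_0_compat; lra| nra]. }
    lra. }
  assert (Hex : exists k, (1 <= k <= N)%nat /\ c k <= eta k).
  { apply NNPP; intros Hne.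
    assert (Hall : forall k, (1 <= k <= N)%nat -> ~ c k <= eta k) by (intros k Hk HB; apply Hne; eauto).
    assert (sum_to N PhiB = 0).
    { apply sum_to_zero; intros k Hk. unfold PhiB. destruct (Rle_dec (c k) (eta k)); [exfalso; eapply Hall; eauto| reflexivity]. }
    assert (Hlt : sum_to N (fun k => (8 * L ^ 2 * M / INR N) * INR k) < sum_to N PhiN).
    { apply sum_to_lt; [lia|]. intros k Hk. pose proof (HPhiN k Hk (Hall k Hk)).
      replace (8 * L ^ 2 * M / INR N * INR k) with (8 * INR k * L ^ 2 * M / INR N) by (field; lra). lra. }
    rewrite sum_to_scal, sum_to_id in Hlt.
    assert (8 * L ^ 2 * M / INR N * (INR N * (INR N + 1) / 2) = 4 * (INR N + 1) * (L ^ 2 * M)) by (field; lra).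
    assert (0 <= L ^ 2 * M) by (apply Rmult_le_pos; nra).
    nra. }
  split; [exact Hex|].
  destruct Hex as [k0 [Hk0 HB0]].
  assert (Hsp : 0 < sum_to N p).
  { eapply Rlt_le_trans; [| apply (sum_to_ge_term N p k0 Hp0 Hk0)].
    rewrite Hp by auto. pose proof (Hk1 k0 ltac:(lia)).
    destruct (Rle_dec (c k0) (eta k0)); [apply Rdiv_lt_0_compat; nra| contradiction]. }
  assert (HJ : forall k, (1 <= k <= N)%nat -> 0 <= p k /\ X (x k)) by (intros; split; [apply Hp0; auto| apply HXk; lia]).
  assert (Exbar : xbar = fun i => sum_to N (fun k => p k * x k i) / sum_to N p).
  { unfold xbar. apply functional_extensionality; intros i. unfold sumB. f_equal.
    apply sum_to_ext; intros k Hk. unfold p. destruct (Rle_dec (c k) (eta k)); ring. }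
  destruct (jensen n X f x p HX Hfconv N HJ Hsp) as [HXbar Hfbar].
  rewrite <- Exbar in HXbar, Hfbar.
  split.
  -
    assert (E1 : sum_to N (fun k => p k * f (x k)) = sum_to N PhiB + f u * sum_to N p).
    { rewrite <- sum_to_scal, <- sum_to_add. apply sum_to_ext; intros k Hk.
      rewrite Hp by auto. unfold PhiB. destruct (Rle_dec (c k) (eta k)); ring. }
    assert (Hlow : 4 * INR N * (L ^ 2 * M) <= sum_to N PhiN + 8 * L / (INR N + 1) * K * sum_to N p).
    { rewrite <- sum_to_scal, <- sum_to_add.
      replace (4 * INR N * (L ^ 2 * M)) with ((8 * L ^ 2 * M / (INR N + 1)) * sum_to N (fun k => INR k))
        by (rewrite sum_to_id; field; lra).
      rewrite <- sum_to_scal. apply sum_to_le; intros k Hk. pose proof (Hk1 k ltac:(lia)).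
      rewrite Hp by auto.
      destruct (Rle_dec (c k) (eta k)) as [HB|HB].
      - unfold PhiN. destruct (Rle_dec (c k) (eta k)); [|contradiction].
        rewrite EK.
        replace (8 * L / (INR N + 1) * (mx * M) * (INR k * L / mu_f)) with
          ((8 * L ^ 2 * M / (INR N + 1) * INR k) * (mx / mu_f)) by (field; lra).
        assert (1 <= mx / mu_f).
        { assert (Hq: 0 <= (mx - mu_f) / mu_f) by (apply Rdiv_le_0_compat; lra).
          replace ((mx - mu_f) / mu_f) with (mx / mu_f - 1) in Hq by (field; lra). lra. }
        assert (0 <= 8 * L ^ 2 * M / (INR N + 1) * INR k) by (apply Rmult_le_pos; [apply Rdiv_le_0_compat; nra| lra]).
        nra.
      - pose proof (HPhiN k Hk HB).
        assert (8 * L ^ 2 * M / (INR N + 1) * INR k <= 8 * INR k * L ^ 2 * M / INR N).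
        { replace (8 * L ^ 2 * M / (INR N + 1) * INR k) with ((8 * INR k * L ^ 2 * M) * / (INR N + 1)) by (field; lra).
          unfold Rdiv. apply Rmult_le_compat_l; [apply Rmult_le_pos; [apply Rmult_le_pos; [apply Rmult_le_pos; lra| nra]| lra]|].
          apply Rinv_le_contravar; lra. }
        lra. }
    assert (0 <= L ^ 2 * M) by (apply Rmult_le_pos; nra).
    assert (Hfin : f xbar - f u <= sum_to N PhiB / sum_to N p).
    { rewrite E1 in Hfbar. replace ((sum_to N PhiB + f u * sum_to N p) / sum_to N p) with
        (sum_to N PhiB / sum_to N p + f u) in Hfbar by (field; lra). lra. }
    eapply Rle_trans; [exact Hfin|]. apply div_le_const; [exact Hsp|]. nra.
  -
    destruct (HG xbar HXbar) as [[dl [Hdl Edl]] _]. cbv beta in Edl.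
    destruct (jensen n X (fun y => g y dl) x p HX (Hgconv dl Hdl) N HJ Hsp) as [_ Hgbar].
    cbv beta in Hgbar. rewrite <- Exbar in Hgbar. rewrite Edl in Hgbar.
    set (SBk := sumB N c eta (fun k => INR k)).
    set (SBe := sumB N c eta (fun k => INR k * eps k)).
    assert (ESp : sum_to N p = L / mu_f * SBk).
    { unfold SBk, sumB. rewrite <- sum_to_scal. apply sum_to_ext; intros k Hk. rewrite Hp by auto.
      destruct (Rle_dec (c k) (eta k)); field; lra. }
    assert (Hup : sum_to N (fun k => p k * g (x k) dl) <= 8 * L / INR N * K * sum_to N p + L / mu_f * SBe).
    { unfold SBe, sumB. rewrite <- !sum_to_scal, <- sum_to_add. apply sum_to_le; intros k Hk.
      rewrite Hp by auto. pose proof (Hk1 k ltac:(lia)).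
      destruct (Rle_dec (c k) (eta k)) as [HB|HB]; [|lra].
      assert (Hgk : g (x k) dl <= G (x k)) by exact (proj2 (HG (x k) (HXk k ltac:(lia))) dl Hdl).
      rewrite Heta' in HB by auto.
      assert (Hpk : 0 <= INR k * L / mu_f) by (apply Rdiv_le_0_compat; nra).
      unfold eps. unfold c in HB.
      assert (g (x k) dl <= 8 * L / INR N * K + (G (x k) - g (x k) (delta k))) by lra.
      replace (8 * L / INR N * K * (INR k * L / mu_f) + L / mu_f * (INR k * (G (x k) - g (x k) (delta k))))
        with (INR k * L / mu_f * (8 * L / INR N * K + (G (x k) - g (x k) (delta k)))) by (field; lra).
      apply Rmult_le_compat_l; auto. }
    assert (HSBk : 0 < SBk).
    { rewrite ESp in Hsp. assert (0 < L / mu_f) by (apply Rdiv_lt_0_compat; lra). nra. }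
    eapply Rle_trans; [exact Hgbar|].
    replace (8 * L / INR N * K + SBe / SBk) with ((8 * L / INR N * K * sum_to N p + L / mu_f * SBe) / sum_to N p)
      by (rewrite ESp; field; lra).
    unfold Rdiv. apply Rmult_le_compat_r; [left; apply Rinv_0_lt_compat; lra| exact Hup].
Qed.
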